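(* Let $y>3$. Then for every integer $k$ with $1\le k\le\log(y)/3$, \[\sum_{m=1}^\infty d_k(m)e^{-m/y}\ll y(\log(3y))^{k+2}.\]
   Context: $d_k$ is the $k$-fold divisor function, i.e. the multiplicative function with $d_k(p^\nu)=\Gamma(k+\nu)/(\Gamma(k)\nu!)$, the Dirichlet coefficients of $\zeta(s)^k$. *)

(* Defs.v *)
From mathcomp Require Import ssreflect ssrfun ssrbool eqtype ssrnat seq div
  fintype bigop prime binomial.
From Stdlib Require Import Reals.
From Coquelicot Require Import Coquelicot.

(* k-fold divisor function: multiplicative, with
   d_k(p^nu) = Gamma(k+nu)/(Gamma(k) nu!) = 'C(k+nu-1, nu) for integer k >= 1.
   For m >= 1: d_k(m) = prod_{p | m} 'C(k + v_p(m) - 1, v_p(m)). *)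
Definition dk (k m : nat) : nat :=
  \prod_(p <- primes m) 'C(k + logn p m - 1, logn p m).

(* Main.v *)
Require Import Defs.
From Stdlib Require Import Reals Lra Lia.
From Coquelicot Require Import Coquelicot.
From mathcomp Require Import ssreflect ssrfun ssrbool eqtype ssrnat seq div
  fintype finfun bigop prime binomial.
From mathcomp Require Import Rstruct.

Section NatPart.
Set Implicit Arguments. Unset Strict Implicit.
Local Open Scope nat_scope.

Lemma dk_ord k d B : d < B ->
  dk k d = \prod_(p < B) 'C(k + logn p d - 1, logn p d).
Proof.
move=> dB.
rewrite (bigID (fun p : 'I_B => (val p) \in primes d)) /=.
rewrite [X in _ * X]big1 ?muln1; last first.
  move=> p /negbTE Hp.
  have -> : logn p d = 0 by apply/eqP; rewrite -leqn0 leqNgt logn_gt0 Hp.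
  by rewrite bin0.
rewrite /dk -(big_mkord (fun p => p \in primes d) (fun p => 'C(k + logn p d - 1, logn p d))).
rewrite -[RHS]big_filter; apply: perm_big.
apply: uniq_perm; first exact: primes_uniq.
  by rewrite filter_uniq // iota_uniq.
move=> p; rewrite mem_filter mem_index_iota /=.
case Hp: (p \in primes d) => //=.
move: Hp; rewrite mem_primes => /and3P [_ d0 pd].
by symmetry; apply: leq_ltn_trans dB; apply: dvdn_leq.
Qed.

Lemma hockey k v : \sum_(j < v.+1) 'C(k + j - 1, j) = 'C(k + v, v).
Proof.
elim: v => [|v IH]; first by rewrite big_ord1 /= !bin0.
rewrite big_ord_recr /= IH addnS binS addnC.
by rewrite subn1 /=.
Qed.

Lemma hockeyB k v B : v < B ->
  \sum_(j < B | j <= v) 'C(k + j - 1, j) = 'C(k + v, v).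
Proof.
case: B => // B vB.
rewrite ltnS in vB; rewrite (big_ord_narrow_leq vB) /=.
exact: hockey.
Qed.

Lemma partB m B : 0 < m -> m < B -> m = \prod_(p < B) p ^ logn p m.
Proof.
move=> m0 mB.
case: B mB => // B; rewrite ltnS => mB.
rewrite -[in LHS](partnT m0) (widen_partn _ mB) big_mkord.
by apply: eq_bigl.
Qed.

Lemma dvd_prod m B (e : nat -> nat) : 0 < m -> m < B ->
  (forall p, p < B -> e p <= logn p m) -> \prod_(p < B) p ^ e p %| m.
Proof.
move=> m0 mB He.
rewrite [X in _ %| X](partB m0 mB).
apply: (big_ind2 (fun x y => x %| y)) => //.
  by move=> x1 x2 y1 y2 H1 H2; apply: dvdn_mul.
by move=> p _; apply: dvdn_exp2l; apply: He.
Qed.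

Lemma logn_prodB p (e : nat -> nat) B : prime p ->
  (forall q, ~~ prime q -> e q = 0) ->
  logn p (\prod_(q < B) q ^ e q) = if p < B then e p else 0.
Proof.
move=> pp He.
elim: B => [|B IH]; first by rewrite big_ord0 logn1.
have pos : forall q, 0 < q ^ e q.
  move=> q; rewrite expn_gt0; case: q => // .
  by rewrite He.
rewrite big_ord_recr /= lognM //; last first.
  by apply: (big_ind (fun x => 0 < x)) => // x y; rewrite muln_gt0 => -> ->.
rewrite IH lognX ltnS.
case pB: (prime B).
  rewrite logn_prime //.
  case: (ltngtP p B) => [lt|gt|->].
  - by rewrite muln0 addn0.
  - by rewrite muln0 addn0.
  - by rewrite muln1.
rewrite (He B) ?pB // mul0n addn0 [in RHS]leq_eqVlt.
have -> : (p == B) = false by apply/eqP => E; rewrite E pB in pp.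
by [].
Qed.

Lemma logn_np p m : ~~ prime p -> logn p m = 0.
Proof. by move=> np; rewrite lognE (negbTE np). Qed.

Lemma logn_lt p d B : d < B -> logn p d < B.
Proof.
move=> dB; case: (posnP d) => [->|d0]; first by rewrite logn0; case: B dB.
exact: leq_trans (ltn_logl p d0) (ltnW dB).
Qed.

Lemma dk_rec k m : 0 < m -> dk k.+1 m = \sum_(d < m.+1 | d %| m) dk k d.
Proof.
move=> m0.
rewrite (dk_ord k.+1 (ltnSn m)).
have E : forall p : 'I_m.+1, 'C(k.+1 + logn p m - 1, logn p m)
   = \sum_(j < m.+1 | j <= logn p m) 'C(k + j - 1, j).
  by move=> p; rewrite hockeyB ?logn_lt // addSn subn1.
rewrite (eq_bigr _ (fun p _ => E p)) {E}.
rewrite bigA_distr_big_dep.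
pose h := fun d : 'I_m.+1 => [ffun p : 'I_m.+1 => (inord (logn p d) : 'I_m.+1)].
pose h' := fun f : {ffun 'I_m.+1 -> 'I_m.+1} =>
   (inord (\prod_(q < m.+1) q ^ f q) : 'I_m.+1).
have hd d p : nat_of_ord (h d p) = logn p d by rewrite /h ffunE inordK ?logn_lt.
rewrite (reindex_onto h h').
  apply: eq_big => d; last first.
    move=> _; rewrite (dk_ord k (ltn_ord d)); apply: eq_bigr => p _.
    by rewrite hd.
  case: (posnP d) => [d0|dpos].
    have -> : (h' (h d) == d) = false.
      have P1 : \prod_(q < m.+1) q ^ h d q = 1.
        by apply: big1 => q _; rewrite hd d0 logn0.
      apply/negbTE; apply/eqP => /(congr1 (@nat_of_ord _)).
      by rewrite /h' P1 inordK // d0.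
    by rewrite andbF d0 dvd0n (negbTE (lt0n_neq0 m0)).
  have -> : h' (h d) == d.
    apply/eqP; apply: val_inj; rewrite /h' /=.
    rewrite (eq_bigr (fun q : 'I_m.+1 => q ^ logn q d)); last by move=> q _; rewrite hd.
    by rewrite -(partB dpos (ltn_ord d)) inordK.
  rewrite andbT; apply/idP/idP => [/familyP H | dm].
    rewrite [X in X %| _](partB dpos (ltn_ord d)).
    apply: (dvd_prod (e := fun p => logn p d)) => // p pm.
    by have := H (inord p); rewrite unfold_in /= hd inordK.
  apply/familyP => p; rewrite unfold_in /= hd.
  exact: dvdn_leq_log.
move=> f /familyP Hf.
pose e := fun n => if n < m.+1 then val (f (inord n)) else 0.
have prodE : \prod_(q < m.+1) q ^ f q = \prod_(q < m.+1) q ^ e q.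
  by apply: eq_bigr => q _; rewrite /e ltn_ord inord_val.
have Hle : forall p, p < m.+1 -> e p <= logn p m.
  by move=> p pm; rewrite /e pm; have := Hf (inord p); rewrite unfold_in /= inordK.
have He : forall q, ~~ prime q -> e q = 0.
  move=> q nq; rewrite /e; case: ifP => // qm.
  by apply/eqP; rewrite -leqn0; have := Hf (inord q); rewrite unfold_in /= inordK // logn_np.
have dv := dvd_prod m0 (ltnSn m) Hle.
have lt : \prod_(q < m.+1) q ^ f q < m.+1.
  by rewrite prodE ltnS; apply: dvdn_leq.
apply/ffunP => p; rewrite ffunE; apply: val_inj => /=.
rewrite inordK //.
have [pp|np] := boolP (prime p).
  by rewrite inordK // prodE logn_prodB // ltn_ord /e ltn_ord inord_val.
rewrite logn_np //.
by apply/esym/eqP; rewrite -leqn0; have := Hf p; rewrite unfold_in /= logn_np.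
exact: logn_lt.
Qed.

Lemma dk1 m : dk 1 m = 1.
Proof. by rewrite /dk big1 // => p _; rewrite add1n subn1 /= binn. Qed.

End NatPart.
Unset Implicit Arguments. Set Strict Implicit.

Open Scope R_scope.

Lemma exp_le x y : x <= y -> exp x <= exp y.
Proof. move=> H; case: (Rle_lt_or_eq_dec _ _ H) => [/exp_increasing|->]; lra. Qed.

Lemma Rbig_le (I : Type) (r : seq I) (P : pred I) (F G : I -> R) :
  (forall i, P i -> F i <= G i) ->
  \big[Rplus/0]_(i <- r | P i) F i <= \big[Rplus/0]_(i <- r | P i) G i.
Proof.
move=> H; apply: (big_ind2 (fun x y => x <= y)) => //; first lra.
by move=> *; lra.
Qed.

Lemma Rbig_le_seq (I : eqType) (r : seq I) (P : pred I) (F G : I -> R) :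
  (forall i, i \in r -> P i -> F i <= G i) ->
  \big[Rplus/0]_(i <- r | P i) F i <= \big[Rplus/0]_(i <- r | P i) G i.
Proof.
move=> H; rewrite !(big_seq_cond P); apply: Rbig_le => i /andP [ir Pi].
exact: H.
Qed.

Lemma Rbig_ge0 (I : Type) (r : seq I) (P : pred I) (F : I -> R) :
  (forall i, P i -> 0 <= F i) -> 0 <= \big[Rplus/0]_(i <- r | P i) F i.
Proof.
move=> H; apply: (big_ind (fun x => 0 <= x)) => //; first lra.
by move=> *; lra.
Qed.

Lemma INR_big (I : Type) (r : seq I) (P : pred I) (F : I -> nat) :
  INR (\sum_(i <- r | P i) F i)%N = \big[Rplus/0]_(i <- r | P i) INR (F i).
Proof. apply: (big_morph INR) => // x y; exact: plus_INR. Qed.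

Lemma Rbig_term (I : eqType) (r : seq I) (G : I -> R) j :
  j \in r -> (forall i, i \in r -> 0 <= G i) ->
  G j <= \big[Rplus/0]_(i <- r) G i.
Proof.
elim: r => // a r IH; rewrite inE => /orP Hj H.
rewrite big_cons.
have H0 : 0 <= \big[Rplus/0]_(i <- r) G i.
  rewrite big_seq; apply: Rbig_ge0 => i ir; apply: H; by rewrite inE ir orbT.
have Ha : 0 <= G a by apply: H; rewrite inE eqxx.
case: Hj => [/eqP ->|jr]; first lra.
have := IH jr (fun i ir => H i (introT orP (or_intror ir))); lra.
Qed.

Lemma Rbig_ind1 (I : eqType) (r : seq I) x (c : R) :
  uniq r -> 0 <= c ->
  \big[Rplus/0]_(i <- r) (if x == i then c else 0) <= c.
Proof.
elim: r => [|a r IH]; first by rewrite big_nil.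
move=> /= /andP [ar ur] c0; rewrite big_cons.
case: (eqVneq x a) => [->|xa].
  rewrite big1_seq; first lra.
  move=> i /andP [_ ir]; case: (eqVneq a i) => // E.
  by rewrite E ir in ar.
have := IH ur c0; lra.
Qed.

Lemma Rbig_le_cond (I : eqType) (r : seq I) (P : pred I) (F G : I -> R) :
  (forall i, i \in r -> P i -> F i <= G i) ->
  (forall i, i \in r -> 0 <= G i) ->
  \big[Rplus/0]_(i <- r | P i) F i <= \big[Rplus/0]_(i <- r) G i.
Proof.
move=> H1 H2; rewrite big_mkcond /=.
apply: Rbig_le_seq => i ir _; case: ifP => Pi; first exact: H1.
exact: H2.
Qed.

Lemma Rbig_recr n (F : nat -> R) :
  \big[Rplus/0]_(0 <= i < n.+1) F i = \big[Rplus/0]_(0 <= i < n) F i + F n.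
Proof. by rewrite big_nat_recr. Qed.

Lemma Rbig_distrr (I : Type) (r : seq I) a (F : I -> R) :
  a * \big[Rplus/0]_(i <- r) F i = \big[Rplus/0]_(i <- r) (a * F i).
Proof. by rewrite big_distrr. Qed.

Lemma Rbig_distrl (I : Type) (r : seq I) (P : pred I) a (F : I -> R) :
  \big[Rplus/0]_(i <- r | P i) F i * a = \big[Rplus/0]_(i <- r | P i) (F i * a).
Proof. by rewrite big_distrl. Qed.

Lemma Rexchange (I J : Type) (rI : seq I) (rJ : seq J) (F : I -> J -> R) :
  \big[Rplus/0]_(i <- rI) \big[Rplus/0]_(j <- rJ) F i j =
  \big[Rplus/0]_(j <- rJ) \big[Rplus/0]_(i <- rI) F i j.
Proof. exact: exchange_big. Qed.

Definition w (s : R) (n : nat) : R :=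
  match n with O => 0 | _ => exp (- s * ln (INR n)) end.

Lemma wE s n : (0 < n)%N -> w s n = exp (- s * ln (INR n)).
Proof. by case: n. Qed.

Lemma w_ge0 s n : 0 <= w s n.
Proof. case: n => [|n] /=; first lra. by apply: Rlt_le; apply: exp_pos. Qed.

Lemma wM s d e : w s (d * e) = w s d * w s e.
Proof.
case: (posnP d) => [->|dp]; first by rewrite mul0n /=; lra.
case: (posnP e) => [->|ep]; first by rewrite muln0 /=; lra.
rewrite !wE ?muln_gt0 ?dp ?ep // mult_INR ln_mult; try by apply: lt_0_INR; apply/ltP.
by rewrite -exp_plus; congr exp; ring.
Qed.

Definition Z s N := \big[Rplus/0]_(0 <= n < N.+1) w s n.
Definition A s k N := \big[Rplus/0]_(0 <= n < N.+1) (INR (dk k n) * w s n).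

Lemma ln_le1 x : 0 < x -> ln x <= x - 1.
Proof. move=> x0; have := exp_ineq1_le (ln x); rewrite exp_ln //; lra. Qed.

Lemma tele t n : 0 < t -> (0 < n)%N ->
  w (1 + t) n.+1 <= (exp (- t * ln (INR n)) - exp (- t * ln (INR n.+1))) / t.
Proof.
move=> t0 n0.
have a1 : 1 <= INR n by apply: (le_INR 1 n); apply/leP.
rewrite wE // S_INR.
set a := INR n in a1 *.
set b := a + 1.
have b0 : 0 < b by rewrite /b; lra.
have D1 : / b <= ln b - ln a.
  have ab0 : 0 < a * / b by apply: Rmult_lt_0_compat; [lra | apply: Rinv_0_lt_compat].
  have ib : 0 < / b by apply: Rinv_0_lt_compat.
  have := ln_le1 _ ab0; rewrite ln_mult ?ln_Rinv //; try lra.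
  have -> : a * / b = 1 - / b by rewrite /b; field; lra.
  lra.
set E := exp (- t * ln b).
have eq1 : exp (- (1 + t) * ln b) = E * / b.
  rewrite /E -{3}(exp_ln b) // -exp_Ropp -exp_plus; congr exp; ring.
have eq2 : exp (- t * ln a) = E * exp (t * (ln b - ln a)).
  by rewrite /E -exp_plus; congr exp; ring.
have X1 := exp_ineq1_le (t * (ln b - ln a)).
set X := exp (t * (ln b - ln a)) in eq2 X1 *.
rewrite eq1 eq2.
have E0 : 0 < E := exp_pos _.
have H : E * (t * / b) <= E * (X - 1).
  apply: Rmult_le_compat_l; first lra.
  have : t * / b <= t * (ln b - ln a) by apply: Rmult_le_compat_l; lra.
  lra.
have -> : E * / b = (E * (t * / b)) / t by field; split; lra.
have -> : E * X - E = E * (X - 1) by ring.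
apply: Rmult_le_compat_r => //.
by left; apply: Rinv_0_lt_compat.
Qed.

Lemma Z_aux t N : 0 < t ->
  \big[Rplus/0]_(0 <= n < N.+2) w (1 + t) n
    <= 1 + (1 - exp (- t * ln (INR N.+1))) / t.
Proof.
move=> t0; elim: N => [|N IH].
  rewrite big_nat_recr // big_nat1 /= ln_1 !Rmult_0_r exp_0.
  have -> : (1 - 1) / t = 0 by field; lra.
  lra.
rewrite Rbig_recr; move: IH.
have := tele _ _ t0 (ltn0Sn N).
set E1 := exp (- t * ln (INR N.+1)).
set E2 := exp (- t * ln (INR N.+2)).
have -> : (1 - E2) / t = (1 - E1) / t + (E1 - E2) / t by field; lra.
lra.
Qed.

Lemma Z_bound s N : 1 < s -> Z s N <= 1 + / (s - 1).
Proof.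
move=> s1; set t := s - 1.
have t0 : 0 < t by rewrite /t; lra.
have -> : s = 1 + t by rewrite /t; ring.
have it0 : 0 < / t by apply: Rinv_0_lt_compat.
case: N => [|N].
  rewrite /Z big_nat1 /=; lra.
rewrite /Z; have := Z_aux _ N t0.
set E := exp (- t * ln (INR N.+1)).
have : 0 < E / t by apply: Rdiv_lt_0_compat => //; apply: exp_pos.
have -> : (1 - E) / t = / t - E / t by field; lra.
lra.
Qed.

Lemma Z_ge0 s N : 0 <= Z s N.
Proof. by apply: Rbig_ge0 => i _; apply: w_ge0. Qed.

Lemma A1 s N : A s 1 N = Z s N.
Proof. by apply: eq_bigr => i _; rewrite dk1 /= Rmult_1_l. Qed.

Lemma Astep s k N : A s k.+1 N <= A s k N * Z s N.
Proof.
rewrite /A /Z Rbig_distrl.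
rewrite [X in _ <= X](eq_bigr (fun d => \big[Rplus/0]_(0 <= e < N.+1)
   (INR (dk k d) * w s d * w s e))); last by move=> d _; rewrite Rbig_distrr.
have T0 : forall d e, 0 <= INR (dk k d) * w s d * w s e.
  move=> d e; apply: Rmult_le_pos; last exact: w_ge0.
  apply: Rmult_le_pos; [exact: pos_INR | exact: w_ge0].
apply: (Rle_trans _ (\big[Rplus/0]_(0 <= m < N.+1) \big[Rplus/0]_(0 <= d < N.+1)
   \big[Rplus/0]_(0 <= e < N.+1)
   (if (d * e == m)%N then INR (dk k d) * w s d * w s e else 0))).
  apply: Rbig_le_seq => m; rewrite mem_index_iota => /andP [_ mN] _.
  have G0 : forall d, 0 <= \big[Rplus/0]_(0 <= e < N.+1)
      (if (d * e == m)%N then INR (dk k d) * w s d * w s e else 0).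
    move=> d; apply: Rbig_ge0 => e _; case: ifP => _; [exact: T0 | lra].
  case: (posnP m) => [E|m0].
    have -> : w s m = 0 by rewrite E.
    rewrite Rmult_0_r; apply: Rbig_ge0 => d _; exact: G0.
  rewrite dk_rec // INR_big Rbig_distrl.
  rewrite -(big_mkord (fun d => d %| m) (fun d => INR (dk k d) * w s m)).
  rewrite (big_nat_widen 0 m.+1 N.+1) //.
  apply: Rbig_le_cond => [d _ /andP [dm _] | d _]; last exact: G0.
  have d0 : (0 < d)%N by apply: dvdn_gt0 m0 dm.
  set e0 := m %/ d.
  have me : m = (d * e0)%N by rewrite /e0 mulnC divnK.
  apply: (Rle_trans _ (if (d * e0 == m)%N then INR (dk k d) * w s d * w s e0 else 0)).
    rewrite -me eqxx {1}me wM; right; ring.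
  apply: (@Rbig_term _ _ (fun e => if (d * e == m)%N then INR (dk k d) * w s d * w s e else 0)).
    by rewrite mem_index_iota /=; apply: leq_ltn_trans (leq_div m d) mN.
  move=> e _ /=; case: ifP => _; [exact: T0 | lra].
rewrite Rexchange; apply: Rbig_le => d _.
rewrite Rexchange; apply: Rbig_le => e _.
apply: Rbig_ind1; [exact: iota_uniq | exact: T0].
Qed.

Lemma A_le s k N : (0 < k)%N -> A s k N <= Z s N ^ k.
Proof.
case: k => // k _; elim: k => [|k IH]; first by rewrite A1 /=; right; ring.
apply: (Rle_trans _ _ _ (Astep s k.+1 N)).
rewrite [Z s N ^ k.+2]/= [X in _ <= X]Rmult_comm.
apply: Rmult_le_compat_r; [exact: Z_ge0 | exact: IH].
Qed.

Lemma ln_le x y : 0 < x -> x <= y -> ln x <= ln y.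
Proof.
move=> x0 H; case: (Rle_lt_or_eq_dec _ _ H) => [/(ln_increasing _ _ x0)|->]; lra.
Qed.

Lemma term_bound y s n : 0 < y -> 0 < s <= 2 -> (0 < n)%N ->
  exp (- INR n / y) <= exp (s * ln y) * w s n.
Proof.
move=> y0 s2 n0.
have nR : 0 < INR n by apply: lt_0_INR; apply/ltP.
rewrite wE // -exp_plus; apply: exp_le.
set u := INR n / y.
have u0 : 0 < u by apply: Rdiv_lt_0_compat.
have lu : ln u = ln (INR n) - ln y.
  have iy : 0 < / y by apply: Rinv_0_lt_compat.
  rewrite /u /Rdiv ln_mult // ln_Rinv //; ring.
have key : s * ln u <= u.
  case: (Rle_or_lt (ln u) 0) => H.
    have : s * ln u <= 0 by apply: Rmult_le_0_l; lra.
    lra.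
  have e2 : 2 <= exp 1 by have := exp_ineq1_le 1; lra.
  have h1 : ln u <= u * / exp 1.
    have := exp_ineq1_le (ln u - 1).
    have -> : exp (ln u - 1) = u * / exp 1 by rewrite /Rminus exp_plus exp_ln // exp_Ropp.
    lra.
  have h2 : / exp 1 <= / 2 by apply: Rinv_le_contravar; lra.
  have h3 : u * / exp 1 <= u * / 2 by apply: Rmult_le_compat_l; lra.
  have h4 : s * ln u <= 2 * ln u by apply: Rmult_le_compat_r; lra.
  have h5 : 2 * (u * / 2) = u by field.
  lra.
have e : - INR n / y = - u by rewrite /u /Rdiv; ring.
rewrite e; rewrite lu in key.
have -> : - s * ln (INR n) = - (s * ln (INR n)) by ring.
have : s * (ln (INR n) - ln y) = s * ln (INR n) - s * ln y by ring.
lra.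
Qed.

Lemma sum_n_big (a : nat -> R) N : sum_n a N = \big[Rplus/0]_(0 <= n < N.+1) a n.
Proof.
elim: N => [|N IH]; first by rewrite sum_O big_nat1.
by rewrite sum_Sn IH [RHS]Rbig_recr.
Qed.

Lemma Rbig_recl n (F : nat -> R) :
  \big[Rplus/0]_(0 <= i < n.+1) F i = F 0%N + \big[Rplus/0]_(0 <= i < n) F i.+1.
Proof. by rewrite big_nat_recl. Qed.

Lemma partial_bound y k N : 3 <= ln y -> (0 < k)%N ->
  sum_n (fun n : nat => INR (dk k (S n)) * exp (- INR (S n) / y)) N
    <= exp 1 * y * (1 + ln y) ^ k.
Proof.
move=> L3 k0.
have y0 : 0 < y.
  case: (Rlt_or_le 0 y) => // H; exfalso.
  have : ln y = 0 by unfold ln; case: (Rlt_dec 0 y) => [h|h] //; exfalso; lra.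
  lra.
set L := ln y in L3 *.
set s := 1 + / L.
have iL : 0 < / L by apply: Rinv_0_lt_compat; lra.
have iL2 : / L <= 1.
  rewrite -Rinv_1; apply: Rinv_le_contravar; lra.
have s2 : 0 < s <= 2 by rewrite /s; lra.
have sL : exp (s * L) = exp 1 * y.
  rewrite -(exp_ln y) // -exp_plus -/L; congr exp; rewrite /s; field; lra.
rewrite sum_n_big.
apply: (Rle_trans _ (\big[Rplus/0]_(0 <= n < N.+1)
    (exp (s * L) * (INR (dk k n.+1) * w s n.+1)))).
  apply: Rbig_le => n _.
  rewrite -Rmult_assoc [exp (s * L) * _]Rmult_comm Rmult_assoc.
  apply: Rmult_le_compat_l; first exact: pos_INR.
  exact: term_bound.
rewrite -Rbig_distrr sL.
apply: Rmult_le_compat_l.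
  apply: Rmult_le_pos; [left; exact: exp_pos | lra].
apply: (Rle_trans _ (A s k N.+1)).
  rewrite /A [X in _ <= X]Rbig_recl [w s 0]/= Rmult_0_r Rplus_0_l; right; reflexivity.
apply: (Rle_trans _ _ _ (@A_le s k N.+1 k0)).
apply: pow_incr; split; first exact: Z_ge0.
have -> : 1 + L = 1 + / (s - 1).
  rewrite /s; have -> : 1 + / L - 1 = / L by ring.
  by rewrite Rinv_inv.
apply: Z_bound; rewrite /s; lra.
Qed.

(* The series is indexed by n = m - 1, i.e. the term for m = n+1. *)

Theorem lemma18 :
  exists C : R, 0 < C /\
    forall (y : R) (k : nat),
      3 < y -> (1 <= k)%coq_nat -> INR k <= ln y / 3 ->
      ex_series (fun n : nat => INR (dk k (S n)) * exp (- INR (S n) / y)) /\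
      Series (fun n : nat => INR (dk k (S n)) * exp (- INR (S n) / y))
        <= C * y * (ln (3 * y)) ^ (k + 2)%coq_nat.
Proof.
exists (exp 1); split; first exact: exp_pos.
move=> y k y3 k1 kL.
have k0 : is_true (ssrnat.leq 1 k) by apply/ssrnat.leP; exact: k1.
have L3 : 3 <= ln y.
  have : INR 1 <= INR k by apply: le_INR.
  have : ln y / 3 * 3 = ln y by field.
  rewrite /= => e; lra.
set a := fun n : nat => INR (dk k (S n)) * exp (- INR (S n) / y).
have a0 : forall n, 0 <= a n.
  move=> n; apply: Rmult_le_pos; [exact: pos_INR | left; exact: exp_pos].
set M := exp 1 * y * (1 + ln y) ^ k.
have bound : forall N, sum_n a N <= M by move=> N; exact: partial_bound.
have Hinc : forall n, sum_n a n <= sum_n a (S n).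
  move=> n; rewrite sum_Sn; have := a0 (S n); rewrite /plus /=; lra.
have [l Hl] := ex_finite_lim_seq_incr _ M Hinc bound.
split; first by exists l.
rewrite /Series (is_lim_seq_unique _ _ Hl) /=.
have lM : Rbar_le l M := is_lim_seq_le _ _ _ _ bound Hl (is_lim_seq_const M).
simpl in lM.
apply: (Rle_trans _ _ _ lM).
have y0 : 0 < y by lra.
have l3 : 1 <= ln 3.
  rewrite -{1}(ln_exp 1); apply: ln_le; [exact: exp_pos | exact: exp_le_3].
have e3 : ln (3 * y) = ln 3 + ln y by rewrite ln_mult //; lra.
rewrite /M; apply: Rmult_le_compat_l.
  apply: Rmult_le_pos; [left; exact: exp_pos | lra].
apply: (Rle_trans _ ((ln (3 * y)) ^ k)).
  apply: pow_incr; lra.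
apply: Rle_pow; [lra | lia].
Qed.
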